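(* Let $k\ge 3$ and let $w$ be a word over $\{a,b\}$. For any occurrence of $u=ba^{k-1}$ in $w$, local position $0$ is forbidden in that occurrence if and only if local position $k-1$ is forbidden in the same occurrence. For any occurrence of $v=b^{k-1}a$ in $w$, local position $0$ is forbidden in that occurrence.
   Context: $\Sigma=\{a,b\}$. For $k\ge 3$, $S_k=\left(\Sigma^k\setminus\{ba^{k-1},b^{k-1}a\}\right)\cup\left(\Sigma^{k-1}\setminus\{a^{k-1},b^{k-1}\}\right)$, $u=ba^{k-1}$, $v=b^{k-1}a$. $\mathit{Pref}(S^* )$ denotes the set of all prefixes of words in $S^*$. For $w=w_1\cdots w_n$, $w[i..j]=w_i\cdots w_j$ (empty if $i>j$). A position $j$, $0\le j\le n-1$, is forbidden in $w$ if $w[j+1..n]\notin\mathit{Pref}(S_k^* )$. An occurrence of $p\in\{u,v\}$ in $w$ is an index $s$ with $w[s+1..s+k]=p$; its local positions are $0,\dots,k-1$, local position $i$ being the position $s+i$ of $w$, and local position $i$ is forbidden in the occurrence if $s+i$ is forbidden in $w$. *)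

(* Defs.v *)
From HB Require Import structures.
From mathcomp Require Import all_boot.
Set Implicit Arguments. Unset Strict Implicit. Unset Printing Implicit Defensive.

Inductive letter := la | lb.

Definition letter_eqb (x y : letter) : bool :=
  match x, y with la, la | lb, lb => true | _, _ => false end.
Lemma letter_eqP : Equality.axiom letter_eqb.
Proof. by case; case; constructor. Qed.
HB.instance Definition _ := hasDecEq.Build letter letter_eqP.

Definition word := seq letter.

Definition u_word (k : nat) : word := lb :: nseq k.-1 la.
Definition v_word (k : nat) : word := rcons (nseq k.-1 lb) la.

Definition inS (k : nat) (x : word) : bool :=
  ((size x == k) && (x != u_word k) && (x != v_word k))
  || ((size x == k.-1) && (x != nseq k.-1 la) && (x != nseq k.-1 lb)).

Definition inSstar (k : nat) (x : word) : Prop :=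
  exists ws : seq word, all (inS k) ws /\ flatten ws = x.

Definition inPrefSstar (k : nat) (x : word) : Prop :=
  exists y : word, inSstar k (x ++ y).

(* Position j (0 <= j <= n-1) is forbidden in w (n = |w|) if
   w[j+1..n] = drop j w is not in Pref(S_k^star). *)
Definition forbidden (k : nat) (w : word) (j : nat) : Prop :=
  j < size w /\ ~ inPrefSstar k (drop j w).

(* s is an occurrence of p in w : w[s+1..s+|p|] = p *)
Definition occurrence (p w : word) (s : nat) : Prop :=
  s + size p <= size w /\ take (size p) (drop s w) = p.

(* Main.v *)
Require Import Defs.
From mathcomp Require Import all_boot.

Lemma first_factor k ws z : all (inS k) ws -> flatten ws = z -> 1 <= size z ->
  exists c ws', [/\ inS k c, all (inS k) ws', z = c ++ flatten ws'
     & (size c = k \/ size c = k.-1)].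
Proof.
case: ws => [|c ws] /=; first by move=> _ <-.
move=> /andP[Hc Hws] <- _; exists c, ws; split => //.
move: Hc; rewrite /inS => /orP[/andP[/andP[/eqP -> _] _]|/andP[/andP[/eqP -> _] _]]; by [left|right].
Qed.

Lemma nseq_rc n (x : letter) : rcons (nseq n x) x = x :: nseq n x.
Proof. by elim: n => //= m ->. Qed.

Lemma v_forb n x : take n.+3 x = v_word n.+3 -> ~ inPrefSstar n.+3 x.
Proof.
move=> Hx [y [ws [Hall Hfl]]].
have Hsz : n.+3 <= size x.
  case: (leqP n.+3 (size x)) => // H.
  move: (Hx); rewrite take_oversize ?(ltnW H) // => E.
  by move: H; rewrite E /v_word size_rcons size_nseq ltnn.
have Hz : 1 <= size (x ++ y) by rewrite size_cat; apply: leq_trans (leq_addr _ _); apply: leq_trans Hsz.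
have [c [ws' [Hc _ Heq Hs]]] := @first_factor _ _ _ Hall Hfl Hz.
have Hc' : c = take (size c) (x ++ y) by rewrite ?catA Heq take_size_cat.
case: Hs => Hs.
- move: Hc; rewrite Hc' Hs takel_cat // Hx /inS.
  by rewrite /v_word size_rcons size_nseq eqxx /= andbF gtn_eqF.
- move: Hc; rewrite Hc' Hs takel_cat /=; last by apply: ltnW.
  rewrite -(@take_takel _ _ _ x (leqnSn _)) Hx /v_word /= -cats1 take_size_cat ?size_nseq // /inS.
  by rewrite /= size_nseq eqxx ltn_eqF /= ?eqxx. Qed.

Lemma u_equiv n t : 0 < size t -> take 1 t = [:: la] ->
  (inPrefSstar n.+3 ((lb :: nseq n.+1 la) ++ t) <-> inPrefSstar n.+3 t).
Proof.
move=> Ht Ht1.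
set h := lb :: nseq n.+1 la.
have Hh : inS n.+3 h.
  by rewrite /inS /h /= size_nseq eqxx ltn_eqF //= orbC /=.
split.
- move=> [y [ws [Hall Hfl]]].
  have Hz : 0 < size ((h ++ t) ++ y) by [].
  have [c [ws' [Hc Hall' Heq Hs]]] := @first_factor _ _ _ Hall Hfl Hz.
  have Hc' : c = take (size c) (h ++ t ++ y) by rewrite ?catA Heq take_size_cat.
  case: Hs => Hs.
  + move: Hc; rewrite Hc' Hs.
    have -> : take n.+3 (h ++ t ++ y) = h ++ [:: la].
      have -> : n.+3 = size h + 1 by rewrite /h /= size_nseq addn1.
      by rewrite takeD take_size_cat // drop_size_cat // takel_cat // Ht1.
    rewrite /inS /u_word /= cats1 nseq_rc /= size_nseq eqxx /=.
    by rewrite eqxx gtn_eqF.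
  + have Hch : c = h by rewrite Hc' Hs take_size_cat // /h /= size_nseq.
    exists y, ws'; split => //.
    by move: Heq; rewrite -catA Hch => /(congr1 (drop (size h))); rewrite !drop_size_cat.
- move=> [y [ws [Hall Hfl]]]; exists y, (h :: ws); split; first by rewrite /= Hh.
  by rewrite /= Hfl catA.
Qed.

Theorem lemma2 (k : nat) (w : word) :
  3 <= k ->
  (forall s, occurrence (u_word k) w s ->
     (forbidden k w s <-> forbidden k w (s + (k - 1)))) /\
  (forall s, occurrence (v_word k) w s -> forbidden k w s).
Proof.
case: k => [|[|[|n]]] // _.
have Su : size (u_word n.+3) = n.+3 by rewrite /u_word /= size_nseq.
have Sv : size (v_word n.+3) = n.+3 by rewrite /v_word size_rcons size_nseq.
split => s; rewrite /occurrence ?Su ?Sv => -[Hsz Hx]; last first.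
  split; first by apply: leq_trans Hsz; by rewrite addnS ltnS leq_addr.
  exact: v_forb.
have -> : n.+3 - 1 = n.+2 by rewrite subn1.
set x := drop s w in Hx *.
have Hh : take n.+2 x = lb :: nseq n.+1 la.
  by rewrite -(@take_takel _ _ _ x (leqnSn _)) Hx /u_word /= -[la :: nseq n la]nseq_rc -cats1 take_size_cat ?size_nseq // cats1 nseq_rc.
have Ht1 : take 1 (drop n.+2 x) = [:: la].
  by rewrite take_drop add1n Hx /u_word /= -[la :: nseq n la]nseq_rc -cats1 drop_size_cat ?size_nseq.
have Hst : 0 < size (drop n.+2 x).
  by move: Ht1; case: (drop n.+2 x).
have E : drop (s + n.+2) w = drop n.+2 x by rewrite /x drop_drop addnC.
rewrite /forbidden -/x E.
have := @u_equiv n _ Hst Ht1; rewrite -Hh cat_take_drop => Hiff.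
have H1 : s < size w by apply: leq_trans Hsz; rewrite addnS ltnS leq_addr.
have H2 : s + n.+2 < size w.
  by apply: leq_trans Hsz; rewrite ltn_add2l.
split => -[_ Hn]; split => // HP; apply: Hn; by apply/Hiff.
Qed.
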